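(* Let $\Gamma$ be a finite simplicial graph satisfying (B1): for all non-adjacent $u,v\in V(\Gamma)$, $u\sim v$. Let $v,w\in V(\Gamma)$ be distinct, non-adjacent vertices, and let $c_1=c_{w,v}$ (the partial conjugation of the single vertex $v$ by $w$). Then there exist $t,c_2\in\mathrm{Aut}(A_\Gamma)$ such that $c_1^m=[t^m,c_2^{-1}]$ for all $m\ge 0$. In particular, $c_1^m\in\mathrm{S}\mathcal{I}A'_\Gamma(m)$ for all $m\ge 0$.
   Context: $n=|V(\Gamma)|$. For $v\in V(\Gamma)$, $\mathrm{lk}(v)$ is the set of vertices adjacent to $v$ and $\mathrm{st}(v)=\mathrm{lk}(v)\cup\{v\}$; $v\le w$ iff $\mathrm{lk}(v)\subset\mathrm{st}(w)$; $v\sim w$ iff $v\le w$ and $w\le v$. $A_\Gamma=\langle V(\Gamma)\mid [u,v]=1 \text{ whenever } u,v \text{ adjacent}\rangle$. Under (B1), $\Gamma-\mathrm{st}(w)$ is totally disconnected, and $c_{w,v}$ denotes the automorphism $v\mapsto w^{-1}vw$ fixing all other vertices. Commutator convention: $[a,b]=a^{-1}b^{-1}ab$. Transvection: for distinct $v,w$ with $v\le w$, $t_{vw}$ maps $v\mapsto vw$, fixing other vertices; partial conjugation $c_{v,Y}$ ($Y$ a component of $\Gamma-\mathrm{st}(v)$) maps $x\mapsto v^{-1}xv$ for $x\in Y$, fixing others. $\mathrm{SAut}^0(A_\Gamma)$ is generated by transvections and partial conjugations; $\mathrm{S}\mathcal{I}A_\Gamma(m)$ is the kernel of $\mathrm{SAut}^0(A_\Gamma)\to\mathrm{SL}(n,\mathbb{Z})\to\mathrm{SL}(n,\mathbb{Z}/m\mathbb{Z})$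 (action on $H_1(A_\Gamma;\mathbb Z)=\mathbb Z^n$, then reduction mod $m$), and $\mathrm{S}\mathcal{I}A'_\Gamma(m)$ is its commutator subgroup. *)

(* Defs.v *)
(* Right-angled Artin groups A_Gamma given by words modulo the
   congruence generated by free cancellation and the commutation relations;
   endomorphisms of A_Gamma represented by the images of the generators. *)
From mathcomp Require Import all_boot all_order all_algebra.
Set Implicit Arguments. Unset Strict Implicit. Unset Printing Implicit Defensive.
Import GRing.Theory Num.Theory.

Section RAAG.
Variable V : finType.
Variable e : rel V.   (* adjacency of the simplicial graph Gamma *)

Definition simplicial := symmetric e /\ irreflexive e.

Definition lk (v : V) : {set V} := [set u | e v u].
Definition st (v : V) : {set V} := v |: lk v.
Definition vle (v w : V) : bool := lk v \subset st w.
Definition vsim (v w : V) : bool := vle v w && vle w v.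
Definition B1 := forall u v : V, ~~ e u v -> vsim u v.

(* words in the generators; (x,false) = x, (x,true) = x^-1 *)
Definition word := seq (V * bool).
Definition winv (w : word) : word := rev (map (fun p => (p.1, ~~ p.2)) w).

Inductive Req : word -> word -> Prop :=
| Req_refl w : Req w w
| Req_sym w1 w2 : Req w1 w2 -> Req w2 w1
| Req_trans w1 w2 w3 : Req w1 w2 -> Req w2 w3 -> Req w1 w3
| Req_free (a b : word) x s : Req (a ++ (x, s) :: (x, ~~ s) :: b) (a ++ b)
| Req_comm (a b : word) x y : e x y ->
    Req (a ++ (x, false) :: (y, false) :: b) (a ++ (y, false) :: (x, false) :: b).

Definition subst (phi : V -> word) (w : word) : word :=
  flatten (map (fun p => if p.2 then winv (phi p.1) else phi p.1) w).

Definition is_endo (phi : V -> word) :=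
  forall u v, e u v -> Req (phi u ++ phi v) (phi v ++ phi u).

Definition idm : V -> word := fun x => [:: (x, false)].
(* composition: (acomp phi psi)(x) = phi (psi x) *)
Definition acomp (phi psi : V -> word) : V -> word := fun x => subst phi (psi x).
Definition apow (phi : V -> word) (m : nat) : V -> word := iter m (acomp phi) idm.
Definition aeq (phi psi : V -> word) := forall x, Req (phi x) (psi x).

Definition inverse_pair (phi psi : V -> word) :=
  [/\ is_endo phi, is_endo psi, aeq (acomp phi psi) idm & aeq (acomp psi phi) idm].
Definition is_aut (phi : V -> word) := exists psi, inverse_pair phi psi.

(* c_{w,v} : v |-> w^-1 v w, other generators fixed *)
Definition cwv (w v : V) : V -> word :=
  fun x => if x == v then [:: (w, true); (v, false); (w, false)] else [:: (x, false)].

(* transvection t_{xy} : x |-> x y, and its inverse x |-> x y^-1 *)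
Definition transv (x y : V) (s : bool) : V -> word :=
  fun z => if z == x then [:: (x, false); (y, s)] else [:: (z, false)].

(* component of Gamma - st(x) containing y (for y not in st(x)) *)
Definition outside_rel (x : V) : rel V :=
  fun a b => [&& e a b, a \notin st x & b \notin st x].
Definition in_comp (x y z : V) : bool := connect (outside_rel x) y z.

(* partial conjugation c_{x,Y} : z |-> x^-1 z x for z in Y (s = false),
   and its inverse z |-> x z x^-1 (s = true) *)
Definition pconj (x y : V) (s : bool) : V -> word :=
  fun z => if in_comp x y z then [:: (x, ~~ s); (z, false); (x, s)]
           else [:: (z, false)].

(* generators of SAut^0(A_Gamma) and their inverses *)
Inductive sgen : (V -> word) -> Prop :=
| sgen_t x y s : x != y -> vle x y -> sgen (transv x y s)
| sgen_c x y s : y \notin st x -> sgen (pconj x y s).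

Inductive gen_prod : (V -> word) -> Prop :=
| gp_id : gen_prod idm
| gp_mul g a : sgen g -> gen_prod a -> gen_prod (acomp g a).

Definition in_SAut0 (phi : V -> word) := exists a, gen_prod a /\ aeq phi a.

(* exponent sum of generator y in a word: entries of the action on H_1 = Z^n *)
Definition expsum (w : word) (y : V) : int :=
  (count (pred1 (y, false)) w)%:Z - (count (pred1 (y, true)) w)%:Z.

(* S IA_Gamma(m): kernel of SAut^0 -> SL(n,Z) -> SL(n, Z/mZ) *)
Definition in_SIA (m : nat) (phi : V -> word) :=
  in_SAut0 phi /\
  forall x y : V, (expsum (phi x) y = (x == y)%:Z %[mod m%:Z])%Z.

Definition is_SIA_commutator (m : nat) (c : V -> word) :=
  exists a ai b bi, [/\ in_SIA m a, in_SIA m b, inverse_pair a ai,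
    inverse_pair b bi & aeq c (acomp ai (acomp bi (acomp a b)))].

Inductive comm_prod (m : nat) : (V -> word) -> Prop :=
| cp_id : comm_prod m idm
| cp_mul c a : is_SIA_commutator m c -> comm_prod m a -> comm_prod m (acomp c a).

(* S IA'_Gamma(m): the commutator subgroup of S IA_Gamma(m) *)
Definition in_SIA' (m : nat) (phi : V -> word) :=
  exists a, comm_prod m a /\ aeq phi a.

End RAAG.

(* Main.v *)
Require Import Defs.
From mathcomp Require Import all_boot all_order all_algebra zify.
Set Implicit Arguments. Unset Strict Implicit. Unset Printing Implicit Defensive.
Import GRing.Theory.

Section Infra.
Variable V : finType.
Variable e : rel V.
Local Notation R := (Req e).

Lemma Rtr a b c : R a b -> R b c -> R a c. Proof. exact: Req_trans. Qed.
Lemma Rsy a b : R a b -> R b a. Proof. exact: Req_sym. Qed.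

Lemma Rcatl c a b : R a b -> R (c ++ a) (c ++ b).
Proof.
elim=> {a b} [w|w1 w2 _ IH|w1 w2 w3 _ IH1 _ IH2|a b x s|a b x y exy].
- exact: Req_refl.
- exact: Rsy.
- exact: Rtr IH1 IH2.
- by rewrite !catA; apply: Req_free.
- by rewrite !catA; apply: Req_comm.
Qed.

Lemma Rcatr c a b : R a b -> R (a ++ c) (b ++ c).
Proof.
elim=> {a b} [w|w1 w2 _ IH|w1 w2 w3 _ IH1 _ IH2|a b x s|a b x y exy].
- exact: Req_refl.
- exact: Rsy.
- exact: Rtr IH1 IH2.
- by rewrite -!catA /=; apply: Req_free.
- by rewrite -!catA /=; apply: Req_comm.
Qed.

Lemma Rcat a a' b b' : R a a' -> R b b' -> R (a ++ b) (a' ++ b').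
Proof. move=> H1 H2; apply: Rtr (Rcatr _ H1) (Rcatl _ H2). Qed.

Lemma Rfree0 x s b : R [:: (x, s), (x, ~~ s) & b] b.
Proof. exact: (Req_free e [::] b x s). Qed.

Lemma winv_cons p (a : word V) : winv (p :: a) = winv a ++ [:: (p.1, ~~ p.2)].
Proof. by rewrite /winv /= rev_cons -cats1. Qed.

Lemma winv_cat (a b : word V) : winv (a ++ b) = winv b ++ winv a.
Proof. by rewrite /winv map_cat rev_cat. Qed.

Lemma winvK (a : word V) : winv (winv a) = a.
Proof. by rewrite /winv map_rev revK -map_comp map_id_in // => [[x s]] _ /=; rewrite negbK. Qed.

Lemma Rinvr (a : word V) : R (a ++ winv a) [::].
Proof.
elim: a => [|p a IH]; first exact: Req_refl.
rewrite winv_cons /= catA.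
apply: Rtr (_ : R (p :: [:: (p.1, ~~ p.2)]) [::]).
  exact: (Rcatl [:: p] (Rcatr _ IH)).
case: p => x s; exact: Rfree0.
Qed.

Lemma Rinvl (a : word V) : R (winv a ++ a) [::].
Proof. by have := Rinvr (winv a); rewrite winvK. Qed.

Lemma subst_cat phi (a b : word V) : subst phi (a ++ b) = subst phi a ++ subst phi b.
Proof. by rewrite /subst map_cat flatten_cat. Qed.

Lemma subst1 phi (p : V * bool) : subst phi [:: p] = if p.2 then winv (phi p.1) else phi p.1.
Proof. by rewrite /subst /= cats0. Qed.

Lemma subst_cons phi p (l : word V) : subst phi (p :: l) = subst phi [:: p] ++ subst phi l.
Proof. by rewrite -cat1s subst_cat. Qed.

Lemma subst_winv phi (a : word V) : subst phi (winv a) = winv (subst phi a).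
Proof.
elim: a => [|[x s] a IH]; first by [].
rewrite -cat1s winv_cat !subst_cat IH winv_cat; congr (_ ++ _).
rewrite [winv [:: (x, s)]]/winv /= !subst1 /=; case: s => //=; by rewrite winvK.
Qed.

Lemma Rsubst phi a b : is_endo e phi -> R a b -> R (subst phi a) (subst phi b).
Proof.
move=> Hphi; elim=> {a b} [w|w1 w2 _ IH|w1 w2 w3 _ IH1 _ IH2|a b x s|a b x y exy].
- exact: Req_refl.
- exact: Rsy.
- exact: Rtr IH1 IH2.
- rewrite !subst_cat; apply: Rcatl.
  rewrite (subst_cons phi (x, s)) (subst_cons phi (x, ~~ s)).
  rewrite catA; apply: Rtr (Rcatr _ (_ : R _ [::])) _; last exact: Req_refl.
  rewrite !subst1 /=; case: s => /=; [exact: Rinvl | exact: Rinvr].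
- rewrite !subst_cat; apply: Rcatl.
  rewrite -[subst phi [:: (x, false), (y, false) & b]]/(phi x ++ (phi y ++ subst phi b)).
  rewrite -[subst phi [:: (y, false), (x, false) & b]]/(phi y ++ (phi x ++ subst phi b)).
  rewrite !catA; apply: Rcatr; exact: Hphi.
Qed.

Lemma subst_comp phi psi (a : word V) : subst (acomp phi psi) a = subst phi (subst psi a).
Proof.
elim: a => [|[x s] a IH]; first by [].
rewrite -cat1s !subst_cat IH; congr (_ ++ _).
rewrite !subst1 /=; case: s => /=; by rewrite /acomp /= ?cats0 ?subst_winv.
Qed.

Lemma endo_comp phi psi : is_endo e phi -> is_endo e psi -> is_endo e (acomp phi psi).
Proof.
move=> H1 H2 u v euv; rewrite /acomp -!subst_cat; apply: Rsubst => //; exact: H2.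
Qed.

Lemma endo_pow phi m : simplicial e -> is_endo e phi -> is_endo e (apow phi m).
Proof.
move=> [sym _] H; elim: m => [|m IH] /=.
  move=> u v euv; exact: (Req_comm [::] [::] euv).
exact: endo_comp.
Qed.

Lemma Rlet x y s1 s2 : simplicial e -> e x y -> R [:: (x, s1); (y, s2)] [:: (y, s2); (x, s1)].
Proof.
move=> [sym _].
have tf : forall x y, e x y -> R [:: (x, true); (y, false)] [:: (y, false); (x, true)].
  move=> a b eab.
  apply: Rtr (_ : R [:: (a, true); (b, false); (a, false); (a, true)] _).
    apply: Rsy; exact: (Req_free e [:: (a, true); (b, false)] [::] a false).
  apply: Rtr (_ : R [:: (a, true); (a, false); (b, false); (a, true)] _).
    apply: Rsy; exact: (Req_comm [:: (a, true)] [:: (a, true)] eab).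
  exact: Rfree0.
move=> exy; case: s1; case: s2.
- apply: Rtr (_ : R [:: (y, true); (y, false); (x, true); (y, true)] _).
    apply: Rsy; exact: Rfree0.
  apply: Rtr (_ : R [:: (y, true); (x, true); (y, false); (y, true)] _).
    have H := Rsy (tf _ _ exy).
    exact: (Rcatl [:: (y, true)] (Rcatr [:: (y, true)] H)).
  exact: (Req_free e [:: (y, true); (x, true)] [::] y false).
- exact: tf.
- apply: Rsy; apply: tf; by rewrite sym.
- exact: (Req_comm [::] [::] exy).
Qed.

Lemma Rletw z s a : simplicial e -> all (fun p => e z p.1) a -> R ((z, s) :: a) (a ++ [:: (z, s)]).
Proof.
move=> Hs; elim: a => [|[y t] a IH] /=; first by move=> _; exact: Req_refl.
case/andP=> ezy Ha.
apply: Rtr (_ : R ((y, t) :: (z, s) :: a) _).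
  exact: (Rcatr a (Rlet s t Hs ezy)).
exact: (Rcatl [:: (y, t)] (IH Ha)).
Qed.

Lemma endo_one x0 phi : simplicial e ->
  (forall x, x != x0 -> phi x = [:: (x, false)]) ->
  (forall z, e x0 z -> all (fun p => e z p.1) (phi x0)) -> is_endo e phi.
Proof.
move=> Hs Hp Ha u z euz.
have [sym irr] := Hs.
case: (eqVneq u x0) => [Eu|ux]; case: (eqVneq z x0) => [Ez|zx].
- by subst; rewrite irr in euz.
- subst; rewrite (Hp z zx); apply: Rsy; apply: Rletw => //; exact: Ha.
- subst; rewrite (Hp u ux); apply: Rletw => //; apply: Ha; by rewrite sym.
- rewrite (Hp u ux) (Hp z zx); exact: (Req_comm [::] [::] euz).
Qed.

End Infra.

Arguments pconj : simpl never.
Arguments in_comp : simpl never.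
Arguments connect : simpl never.

Section Main.
Variable V : finType.
Variable e : rel V.
Variables v w : V.
Hypothesis Hs : simplicial e.
Hypothesis HB : B1 e.
Hypothesis vw : v != w.
Hypothesis nvw : ~~ e v w.
Local Notation R := (Req e).

Lemma wv : w != v. Proof. by rewrite eq_sym. Qed.

Lemma vlevw : vle e v w && vle e w v.
Proof. exact: HB nvw. Qed.

Lemma lkvw z : e v z -> e w z.
Proof.
move=> evz; case/andP: vlevw => /subsetP H _.
have := H z; rewrite /lk /st in_set evz in_setU1 in_set => /(_ isT) /orP [/eqP Ez|//].
by move: nvw; rewrite -Ez evz.
Qed.

Lemma lkwv z : e w z -> e v z.
Proof.
move=> ewz; case/andP: vlevw => _ /subsetP H.
have := H z; rewrite /lk /st in_set ewz in_setU1 in_set => /(_ isT) /orP [/eqP Ez|//].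
case: Hs => sym _; by move: nvw; rewrite -Ez sym ewz.
Qed.

Lemma wst : w \notin st e v.
Proof. by rewrite /st in_setU1 /lk in_set negb_or wv. Qed.

Lemma in_comp_w z : in_comp e v w z = (z == w).
Proof.
apply/idP/idP; last by move/eqP->; exact: connect0.
case/connectP=> [[|y p]] /= ; first by move=> _ ->.
case/andP=> /and3P [ewy _ ysv] _ _.
by rewrite /st in_setU1 /lk in_set (lkwv ewy) orbT in ysv.
Qed.

Lemma subst_nseq (phi : V -> word V) s m : phi w = [:: (w, false)] ->
  subst phi (nseq m (w, s)) = nseq m (w, s).
Proof.
move=> Hw; elim: m => [|m IH] //.
change (subst phi ((w,s) :: nseq m (w,s)) = (w,s) :: nseq m (w,s)).
rewrite subst_cons IH subst1 /= Hw; by case: (s).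
Qed.

Lemma apow_S (phi : V -> word V) m z : apow phi m.+1 z = subst phi (apow phi m z).
Proof. by []. Qed.

Lemma apow_fix (phi : V -> word V) m z : phi z = [:: (z, false)] -> apow phi m z = [:: (z, false)].
Proof.
move=> Hz; elim: m => [|m IH] //.
by rewrite apow_S IH subst1 /= Hz.
Qed.


Lemma tw s : transv v w s w = [:: (w, false)].
Proof. by rewrite /transv (negbTE wv). Qed.

Lemma tz s z : z != v -> transv v w s z = [:: (z, false)].
Proof. by move=> zv; rewrite /transv (negbTE zv). Qed.

Lemma apow_t s m : apow (transv v w s) m v = (v, false) :: nseq m (w, s).
Proof.
elim: m => [|m IH] //.
rewrite apow_S IH subst_cons subst_nseq ?tw // subst1 /= /transv eqxx.
by [].
Qed.

Lemma c1w : cwv w v w = [:: (w, false)].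
Proof. by rewrite /cwv (negbTE wv). Qed.

Lemma nseq_shift (p : V * bool) m (l : word V) : nseq m p ++ p :: l = p :: nseq m p ++ l.
Proof. by elim: m => //= m ->. Qed.

Lemma apow_c1 m : apow (cwv w v) m v = nseq m (w, true) ++ (v, false) :: nseq m (w, false).
Proof.
elim: m => [|m IH] //.
rewrite apow_S IH subst_cat subst_cons subst_nseq ?c1w // subst1 /= subst_nseq ?c1w //.
rewrite /cwv eqxx /=.
by rewrite nseq_shift.
Qed.

Lemma pw s : pconj e v w s w = [:: (v, ~~ s); (w, false); (v, s)].
Proof. by rewrite /pconj in_comp_w eqxx. Qed.

Lemma pz s z : z != w -> pconj e v w s z = [:: (z, false)].
Proof. by move=> zw; rewrite /pconj in_comp_w (negbTE zw). Qed.


Lemma endo_t s : is_endo e (transv v w s).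
Proof.
apply: (endo_one (x0 := v)) => //; first exact: tz.
case: Hs => sym _ z evz; rewrite /transv eqxx /= sym evz /=.
by rewrite sym (lkvw evz).
Qed.

Lemma endo_p s : is_endo e (pconj e v w s).
Proof.
apply: (endo_one (x0 := w)) => //; first exact: pz.
case: Hs => sym _ z ewz; rewrite pw /=.
have ezv : e z v by rewrite sym (lkwv ewz).
have ezw : e z w by rewrite sym ewz.
by rewrite ezv ezw.
Qed.

Lemma subst3 (phi : V -> word V) a b c : subst phi [:: a; b; c] = subst phi [:: a] ++ subst phi [:: b] ++ subst phi [:: c].
Proof. by rewrite /subst /= !cats0. Qed.

Lemma tv s : transv v w s v = [:: (v, false); (w, s)].
Proof. by rewrite /transv eqxx. Qed.

Lemma inv_t s : aeq e (acomp (transv v w s) (transv v w (~~ s))) (@idm V).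
Proof.
move=> x; rewrite /acomp; case: (eqVneq x v) => [->|xv].
  rewrite tv subst_cons subst1 /= tv subst1 /= tw.
  case: (s) => /=; exact: (Rcatl [:: (v, false)] (Rfree0 _ _ _ [::])).
rewrite (tz _ xv) subst1 /= (tz _ xv); exact: Req_refl.
Qed.

Lemma inv_p s : aeq e (acomp (pconj e v w s) (pconj e v w (~~ s))) (@idm V).
Proof.
move=> x; rewrite /acomp; case: (eqVneq x w) => [->|xw].
  rewrite (pw (~~ s)) subst3 !subst1 /= (pz s vw) (pw s).
  case: (s) => /=.
  - exact: (Rtr (Rfree0 e v true _) (Rcatl [:: (w, false)] (Rfree0 e v true [::]))).
  - exact: (Rtr (Rfree0 e v false _) (Rcatl [:: (w, false)] (Rfree0 e v false [::]))).
rewrite (pz (~~ s) xw) subst1 /= (pz s xw); exact: Req_refl.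
Qed.

Lemma winv_nseq m (p : V * bool) : winv (nseq m p) = nseq m (p.1, ~~ p.2).
Proof. by rewrite /winv map_nseq rev_nseq. Qed.

Lemma inv_tpow s m : aeq e (acomp (apow (transv v w s) m) (apow (transv v w (~~ s)) m)) (@idm V).
Proof.
move=> x; rewrite /acomp; case: (eqVneq x v) => [->|xv].
  rewrite apow_t subst_cons subst1 /= apow_t subst_nseq; last by rewrite apow_fix // tw.
  apply: (Rcatl [:: (v, false)]).
  have := Rinvr e (nseq m (w, s)); by rewrite winv_nseq.
rewrite (apow_fix _ (tz _ xv)) subst1 /= (apow_fix _ (tz _ xv)); exact: Req_refl.
Qed.

Lemma ip_t s : inverse_pair e (transv v w s) (transv v w (~~ s)).
Proof.
split; [exact: endo_t|exact: endo_t|exact: inv_t|].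
by have := inv_t (~~ s); rewrite negbK.
Qed.

Lemma ip_p s : inverse_pair e (pconj e v w s) (pconj e v w (~~ s)).
Proof.
split; [exact: endo_p|exact: endo_p|exact: inv_p|].
by have := inv_p (~~ s); rewrite negbK.
Qed.

Lemma ip_tpow s m : inverse_pair e (apow (transv v w s) m) (apow (transv v w (~~ s)) m).
Proof.
split; [exact: endo_pow (endo_t _)|exact: endo_pow (endo_t _)|exact: inv_tpow|].
by have := inv_tpow (~~ s) m; rewrite negbK.
Qed.

Lemma c2nseq m : R ((v, false) :: subst (pconj e v w false) (nseq m (w, true)))
                    (nseq m (w, true) ++ [:: (v, false)]).
Proof.
elim: m => [|m IH]; first exact: Req_refl.
change (nseq m.+1 (w, true)) with ((w, true) :: nseq m (w, true)).
rewrite subst_cons subst1 /= (pw false) /winv /= -/(winv _).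
apply: Rtr (Rfree0 e v false _) _.
exact: (Rcatl [:: (w, true)] IH).
Qed.

Lemma wconj m : R (nseq m (w, true) ++ (w, false) :: winv (nseq m (w, true))) [:: (w, false)].
Proof.
elim: m => [|m IH]; first exact: Req_refl.
change (nseq m.+1 (w, true)) with ((w, true) :: nseq m (w, true)).
rewrite winv_cons.
rewrite [X in R X _](_ : _ = (w, true) :: ((nseq m (w, true) ++ (w, false) :: winv (nseq m (w, true))) ++ [:: (w, false)])); last by rewrite /= -catA.
apply: Rtr (Rcatl [:: (w, true)] (Rcatr [:: (w, false)] IH)) _.
exact: (Rfree0 e w true _).
Qed.

Lemma main_eq m : aeq e (apow (cwv w v) m)
  (acomp (apow (transv v w false) m) (acomp (pconj e v w false)
     (acomp (apow (transv v w true) m) (pconj e v w true)))).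
Proof.
have eTI := endo_pow m Hs (endo_t false).
have eC := endo_p false.
have TIw : apow (transv v w false) m w = [:: (w, false)] by rewrite apow_fix // tw.
move=> x; rewrite /acomp; case: (eqVneq x v) => [->|xv].
  rewrite (pz true vw) subst1 /= apow_t subst_cons subst1 /= (pz false vw) apow_c1.
  apply: Rsy; apply: Rtr (Rsubst eTI (c2nseq m)) _.
  rewrite subst_cat subst_nseq // subst1 /= apow_t; exact: Req_refl.
case: (eqVneq x w) => [->|xw].
  rewrite (apow_fix _ c1w) (pw true) subst3 !subst1 /= (apow_fix _ (tw true)) apow_t.
  apply: Rsy.
  have HX : R ((v, false) :: nseq m (w, true) ++ [:: (w, false)] ++ winv ((v, false) :: nseq m (w, true)))
              [:: (v, false); (w, false); (v, true)].
    rewrite winv_cons.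
    rewrite [X in R X _](_ : _ = (v, false) :: ((nseq m (w, true) ++ (w, false) :: winv (nseq m (w, true))) ++ [:: (v, true)])); last by rewrite /= -catA.
    exact: (Rcatl [:: (v, false)] (Rcatr [:: (v, true)] (wconj m))).
  apply: Rtr (Rsubst eTI (Rsubst eC HX)) _.
  rewrite subst3 !subst1 /= (pz false vw) (pw false) /winv /=.
  have HC : R [:: (v, false); (v, true); (w, false); (v, false); (v, true)] [:: (w, false)].
    exact: (Rtr (Rfree0 e v false _) (Rcatl [:: (w, false)] (Rfree0 e v false [::]))).
  apply: Rtr (Rsubst eTI HC) _.
  rewrite subst1 /= TIw; exact: Req_refl.
rewrite (pz true xw) subst1 /= (apow_fix _ (tz true xv)) subst1 /= (pz false xw) subst1 /=.
rewrite (apow_fix _ (tz false xv)) (apow_fix m (_ : cwv w v x = [:: (x, false)])).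
  exact: Req_refl.
by rewrite /cwv (negbTE xv).
Qed.

Lemma acomp_idm (phi : V -> word V) x : acomp phi (@idm V) x = phi x.
Proof. by rewrite /acomp /subst /= cats0. Qed.

Lemma gp_pow g m : sgen e g -> gen_prod e (apow g m).
Proof. move=> Hg; elim: m => [|m IH]; [exact: gp_id | exact: gp_mul]. Qed.

Lemma modz_sub (a b : int) (m : nat) : (a - b * m%:Z = a %[mod m%:Z])%Z.
Proof. by rewrite addrC -mulNr modzMDl. Qed.

Lemma expsum1 (x y : V) : expsum [:: (x, false)] y = Posz (x == y).
Proof. by rewrite /expsum /= !xpair_eqE eqxx andbT (_ : (false == true) = false) // andbF !addn0 subr0. Qed.

Lemma SIA_t m : in_SIA e m (apow (transv v w true) m).
Proof.
split.
  exists (apow (transv v w true) m); split; last by move=> x; exact: Req_refl.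
  apply: gp_pow; apply: sgen_t => //; by case/andP: vlevw.
move=> x y; case: (eqVneq x v) => [->|xv].
  rewrite apow_t /expsum /= !count_nseq /= !xpair_eqE /= !andbT !andbF /= mul0n add0n addn0.
  by rewrite PoszM modz_sub.
by rewrite (apow_fix _ (tz true xv)) expsum1.
Qed.

Lemma SIA_c m : in_SIA e m (pconj e v w true).
Proof.
split.
  exists (acomp (pconj e v w true) (@idm V)); split; last by move=> x; rewrite acomp_idm; exact: Req_refl.
  apply: gp_mul; [apply: sgen_c; exact: wst | exact: gp_id].
move=> x y; case: (eqVneq x w) => [->|xw].
  rewrite (pw true) /expsum /= !xpair_eqE /= !andbT !andbF /= !addn0 add0n.
  congr (_ %% _)%Z; lia.
by rewrite (pz true xw) expsum1.
Qed.

Lemma final :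
  (exists t ti c2 c2i : V -> word V,
     [/\ inverse_pair e t ti, inverse_pair e c2 c2i &
       forall m : nat,
         aeq e (apow (cwv w v) m)
               (acomp (apow ti m) (acomp c2 (acomp (apow t m) c2i)))])
  /\ (forall m : nat, in_SIA' e m (apow (cwv w v) m)).
Proof.
split.
  exists (transv v w true), (transv v w false), (pconj e v w false), (pconj e v w true).
  split; [exact: ip_t true | exact: ip_p false | exact: main_eq].
move=> m.
set C := acomp (apow (transv v w false) m) (acomp (pconj e v w false)
     (acomp (apow (transv v w true) m) (pconj e v w true))).
exists (acomp C (@idm V)); split.
  apply: cp_mul; last exact: cp_id.
  exists (apow (transv v w true) m), (apow (transv v w false) m), (pconj e v w true), (pconj e v w false).
  split; [exact: SIA_t | exact: SIA_c | exact: ip_tpow true m | exact: ip_p true |].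
  move=> x; exact: Req_refl.
move=> x; rewrite acomp_idm; exact: main_eq.
Qed.

End Main.

Theorem lemma3p6 (V : finType) (e : rel V) (v w : V) :
  simplicial e -> B1 e -> v != w -> ~~ e v w ->
  (exists t ti c2 c2i : V -> word V,
     [/\ inverse_pair e t ti, inverse_pair e c2 c2i &
       forall m : nat,
         (* c_1^m = [t^m, c_2^-1] = t^-m c_2 t^m c_2^-1 *)
         aeq e (apow (cwv w v) m)
               (acomp (apow ti m) (acomp c2 (acomp (apow t m) c2i)))])
  /\ (forall m : nat, in_SIA' e m (apow (cwv w v) m)).
Proof.
move=> Hs HB vw nvw; exact: (final Hs HB vw nvw).
Qed.
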